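(* For integers $m\ge2$ and $p\ge0$, \[ \sum_{t=0}^{m-2}\binom{m-1}{t}a_{m-t,\,p+t}=(m-1)^{m+p-1}. \]
   Context: For integers $m\ge2$ and $p\ge0$, define \[ a_{m,p}:=\sum_{\substack{k_2,\dots,k_m\ge0\\ k_2+\cdots+k_m=p}}\frac{(k_2+\cdots+k_m+m-1)!}{(k_2+1)!\cdots(k_m+1)!} \] (a sum over $(m-1)$-tuples of nonnegative integers $(k_2,\dots,k_m)$). *)

(* Defs.v *)
From mathcomp Require Import all_boot all_order all_algebra.
Set Implicit Arguments. Unset Strict Implicit. Unset Printing Implicit Defensive.
Import Order.TTheory GRing.Theory Num.Theory.
Local Open Scope ring_scope.

(* The tuple is indexed by 'I_(m-1); each k_i <= p is forced by the sum
   condition, so ranging over 'I_p.+1 loses nothing. *)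
Definition a_mp (m p : nat) : rat :=
  \sum_(k : {ffun 'I_(m.-1) -> 'I_p.+1} | (\sum_(i < m.-1) (k i : nat))%N == p)
    ((\sum_(i < m.-1) (k i : nat) + m - 1)`!)%N%:R
      / \prod_(i < m.-1) (((k i : nat).+1)`!)%:R.

(* Main.v *)
Require Import Defs.
From mathcomp Require Import all_boot all_order all_algebra.
Import Order.TTheory GRing.Theory Num.Theory.
Local Open Scope ring_scope.

Lemma coef_pow_ffun (c : nat -> rat) (r b q : nat) :
  ((\poly_(j < b) c j) ^+ r)`_q =
  \sum_(f : {ffun 'I_r -> 'I_b} | (\sum_(i < r) (f i : nat))%N == q) \prod_(i < r) c (f i).
Proof.
rewrite poly_def -{1}(card_ord r) -prodr_const.
rewrite (bigA_distr_bigA (fun (i : 'I_r) (j : 'I_b) => c j *: 'X^j)).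
rewrite coef_sum [RHS]big_mkcond /=; apply: eq_bigr => f _.
have -> : \prod_(i < r) (c (f i) *: 'X^(f i)) =
   (\prod_(i < r) c (f i))%:P * 'X^(\sum_(i < r) (f i : nat)).
  rewrite -prodrXr rmorph_prod -big_split /=.
  by apply: eq_bigr => i _; rewrite mul_polyC.
rewrite coefCM coefXn eq_sym.
by case: eqP => _; rewrite ?mulr1 ?mulr0.
Qed.

Definition Ep (b : nat) : {poly rat} := \poly_(j < b) (((j.+1)`!)%:R)^-1.
Definition Tp (b : nat) : {poly rat} := \poly_(j < b) ((j`!)%:R)^-1.

Lemma a_coef r q : a_mp r.+1 q = ((q + r)`!)%:R * (Ep q.+1 ^+ r)`_q.
Proof.
rewrite /a_mp /Ep coef_pow_ffun mulr_sumr /=; apply: eq_bigr => k /eqP Hk.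
rewrite Hk addnS subn1 /= prodfV //.
Qed.

Lemma agree_mul (A B C D : {poly rat}) q :
  (forall i, (i <= q)%N -> A`_i = B`_i) ->
  (forall i, (i <= q)%N -> C`_i = D`_i) ->
  forall i, (i <= q)%N -> (A * C)`_i = (B * D)`_i.
Proof.
move=> HA HC i Hi; rewrite !coefM; apply: eq_bigr => j _.
have Hj : (j <= q)%N by apply: leq_trans Hi; rewrite -ltnS.
rewrite HA // HC //; apply: leq_trans Hi; exact: leq_subr.
Qed.

Lemma agree_pow (A B : {poly rat}) q r :
  (forall i, (i <= q)%N -> A`_i = B`_i) ->
  forall i, (i <= q)%N -> (A ^+ r)`_i = (B ^+ r)`_i.
Proof.
move=> HA; elim: r => [|r IH] i Hi; first by rewrite !expr0.
by rewrite !exprS; apply: (@agree_mul _ _ _ _ q) => // j Hj; apply: IH.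
Qed.

Lemma trunc r q b b' : (q < b)%N -> (q < b')%N ->
  (Ep b ^+ r)`_q = (Ep b' ^+ r)`_q.
Proof.
move=> Hb Hb'; apply: (@agree_pow _ _ q) => // i Hi.
rewrite /Ep !coef_poly (leq_ltn_trans Hi Hb) (leq_ltn_trans Hi Hb') //.
Qed.

Lemma XE b : 'X * Ep b = Tp b.+1 - 1.
Proof.
apply/polyP => i; rewrite coefXM coefB coef1 /Ep /Tp !coef_poly.
case: i => [|i] /=; first by rewrite fact0 invr1 subrr.
by rewrite ltnS subr0.
Qed.

Lemma Tpow b n j : (j <= b)%N -> (Tp b.+1 ^+ n)`_j = (n ^ j)%:R / (j`!)%:R.
Proof.
elim: n j => [|n IH] j Hj.
  rewrite expr0 coef1; case: j Hj => [|j] _; first by rewrite fact0 invr1 mulr1.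
  by rewrite exp0n // mul0r.
rewrite exprSr coefM.
rewrite -[n.+1]add1n expnDn natr_sum mulr_suml; apply: eq_bigr => -[i /=] Hi _.
have Hij : (i <= j)%N by rewrite -ltnS.
rewrite IH; last by apply: leq_trans Hj.
rewrite /Tp coef_poly ltnS (leq_trans (leq_subr _ _) Hj).
rewrite exp1n mul1n -(bin_fact Hij) !natrM !invfM.
have Hc : ('C(j, i))%:R != 0 :> rat by rewrite pnatr_eq0 -lt0n bin_gt0.
by rewrite [_%:R * (n ^ i)%:R]mulrC -mulrA -mulrA mulVKf.
Qed.

Lemma term n p (t : nat) : (t < n)%N ->
  a_mp (n.+1 - t)%N (p + t)%N = (((n + p)%N`!)%:R * ((Tp (n + p)%N.+2 - 1) ^+ (n - t)%N)`_(n + p)%N)%R.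
Proof.
move=> Ht; have Htn := ltnW Ht.
rewrite subSn // a_coef.
have -> : (p + t + (n - t) = n + p)%N by rewrite -addnA subnKC // addnC.
congr (_ * _).
rewrite (@trunc _ _ _ (n + p)%N.+1) ?ltnS ?leqnn //; last first.
  by rewrite [(n + p)%N]addnC leq_add2l.
rewrite -(XE (n + p)%N.+1) exprMn coefXnM.
have Hle : (n - t <= n + p)%N by apply: leq_trans (leq_subr _ _) (leq_addr _ _).
rewrite ltnNge Hle /=; congr (_`_ _).
by rewrite subnBA // -addnA addnC addKn addnC.
Qed.

Lemma sumG n N : (0 < N)%N ->
  \sum_(t < n) ('C(n, t))%:R * (((Tp N.+2 - 1) ^+ (n - t)%N)`_N) = (n ^ N)%:R / (N`!)%:R.
Proof.
move=> HN; rewrite -(@Tpow N.+1 n N (leqnSn N)).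
have -> : Tp N.+2 ^+ n = (Tp N.+2 - 1 + 1) ^+ n by rewrite subrK.
rewrite exprD1n coef_sum big_ord_recl /= expr0 coefMn bin0 coef1 gtn_eqF // mul0rn add0r.
rewrite (reindex_inj rev_ord_inj) /=; apply: eq_bigr => t _.
rewrite coefMn mulr_natl; congr (_ *+ _); last first.
  by rewrite /bump leq0n /= add1n bin_sub.
by rewrite /bump leq0n /= add1n subKn.
Qed.

Theorem proposition3 (m p : nat) (hm : (2 <= m)%N) :
  \sum_(t < m.-1) ('C(m.-1, t))%:R * a_mp (m - t) (p + t)
  = ((m.-1) ^ (m + p - 1))%:R :> rat.
Proof.
case: m hm => [|n] // hn; rewrite /= .
have Hn : (0 < n)%N by [].
under eq_bigr => t _ do rewrite (@term n p t (ltn_ord t)) mulrCA.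
rewrite -mulr_sumr sumG; last by rewrite addn_gt0 Hn.
rewrite addSn subn1 /= mulrC divfK //.
by rewrite pnatr_eq0 -lt0n fact_gt0.
Qed.
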